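(* Let $w \in \mathrm{GF}(2^7)\setminus\{0,1\}$, let $\sqrt{w}$ denote the unique square root of $w$ in $\mathrm{GF}(2^7)$, and let $\sigma$ be a non-trivial field automorphism of $\mathrm{GF}(2^7)$, say $\sigma: y\mapsto y^{2^k}$ with $1\le k\le 6$. For $i\ge 1$ write $\sqrt{w}^{-(\sigma^i+\cdots+\sigma^2+\sigma)}$ for the element $\sqrt{w}^{-(2^{ki}+\cdots+2^{2k}+2^{k})}$. Then the set \[ \{0,1,\sqrt{w}^{-\sigma}, \sqrt{w}^{-(\sigma^2+\sigma)}, \sqrt{w}^{-(\sigma^3+\sigma^2+\sigma)},\dots,\sqrt{w}^{-(\sigma^6+\cdots+\sigma^2+\sigma)}\} \] can be written as the set $\{0,1,x,x^3,x^7,x^{15},x^{31},x^{63}\}$, where $x$ is one of the elements $\sqrt{w}^{-(\sigma^i+\cdots+\sigma)}$, $1\le i\le 6$. *)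

(* Defs.v *)
From HB Require Import structures.
From mathcomp Require Import all_boot all_order all_algebra all_field.
Set Implicit Arguments. Unset Strict Implicit. Unset Printing Implicit Defensive.
Import GRing.Theory.
Local Open Scope ring_scope.

Definition sigma_exp (k i : nat) : nat := (\sum_(1 <= j < i.+1) 2 ^ (k * j))%N.

Definition sqrt_pow (F : fieldType) (r : F) (k i : nat) : F :=
  (r ^+ sigma_exp k i)^-1.

(* Main.v *)
Require Import Defs.
From HB Require Import structures.
From mathcomp Require Import all_boot all_order all_algebra all_field.
Import GRing.Theory.
Local Open Scope ring_scope.

Fixpoint rs (k i : nat) : nat :=
  if i is i'.+1 then (rs k i' + 2 ^ ((k * i) %% 7))%N else 0%N.

Lemma pow2mod m : (2 ^ m %% 127 = 2 ^ (m %% 7) %% 127)%N.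
Proof.
rewrite {1}(divn_eq m 7) expnD [(_ %/ 7 * 7)%N]mulnC expnM -modnMml -modnXm.
have -> : (2 ^ 7 %% 127 = 1)%N by [].
by rewrite exp1n mul1n.
Qed.

Lemma sigma_rs k i : (sigma_exp k i %% 127 = rs k i %% 127)%N.
Proof.
rewrite /sigma_exp; elim: i => [|i IH]; first by rewrite big_geq.
rewrite big_nat_recr //= -modnDm IH pow2mod modnDm.
by rewrite -modnDm modnDm.
Qed.

Lemma key (T : finType) (f : nat -> T) (g1 g2 : 'I_6 -> T)
  (c1 c2 : nat -> nat) :
  (forall j : 'I_6, g1 j = f (c1 j %% 127)%N) ->
  (forall j : 'I_6, g2 j = f (c2 j %% 127)%N) ->
  all (fun j => has (fun j' => c1 j %% 127 == c2 j' %% 127)%N (iota 0 6)) (iota 0 6) ->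
  all (fun j => has (fun j' => c2 j %% 127 == c1 j' %% 127)%N (iota 0 6)) (iota 0 6) ->
  [set g1 j | j : 'I_6] = [set g2 j | j : 'I_6].
Proof.
move=> e1 e2 /allP h1 /allP h2; apply/setP=> y.
apply/imsetP/imsetP => -[j _ ->]; have hj : (j : nat) \in iota 0 6 by rewrite mem_iota /=.
- have /hasP[j' hj' /eqP e] := h1 j hj.
  rewrite mem_iota /= in hj'.
  by exists (Ordinal hj') => //; rewrite e1 e2 e.
- have /hasP[j' hj' /eqP e] := h2 j hj.
  rewrite mem_iota /= in hj'.
  by exists (Ordinal hj') => //; rewrite e1 e2 e.
Qed.

Theorem lemma5 (F : finFieldType) (hF : #|F| = 128%N)
  (w r : F) (hw0 : w != 0) (hw1 : w != 1) (hr : r ^+ 2 = w)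
  (k : nat) (hk : (1 <= k <= 6)%N) :
  exists2 i : nat, (1 <= i <= 6)%N &
    0 |: (1 |: [set sqrt_pow r k j.+1 | j : 'I_6])
    = 0 |: (1 |: [set (sqrt_pow r k i) ^+ (2 ^ j.+1 - 1) | j : 'I_6]).
Proof.
have r0 : r != 0 by apply: contraNneq hw0 => r0; rewrite -hr r0 expr0n.
set b := r^-1.
have hb : b ^+ 127 = 1.
  have h := expf_card r; rewrite hF in h.
  have : r ^+ 127 * r = 1 * r by rewrite -exprSr mul1r.
  by move/(mulIf r0); rewrite /b exprVn => ->; rewrite invr1.
have E1 n : sqrt_pow r k n = b ^+ (rs k n %% 127).
  by rewrite /sqrt_pow -exprVn -sigma_rs (expr_mod _ hb).
have E2 i m : (sqrt_pow r k i) ^+ m = b ^+ ((rs k i * m) %% 127).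
  by rewrite /sqrt_pow -exprVn -exprM -[LHS](expr_mod _ hb) -modnMml sigma_rs modnMml.
have K i : all (fun j => has (fun j' => rs k j.+1 %% 127 == (rs k i * (2 ^ j'.+1 - 1)) %% 127)%N (iota 0 6)) (iota 0 6) ->
  all (fun j => has (fun j' => (rs k i * (2 ^ j.+1 - 1)) %% 127 == rs k j'.+1 %% 127)%N (iota 0 6)) (iota 0 6) ->
    0 |: (1 |: [set sqrt_pow r k j.+1 | j : 'I_6])
    = 0 |: (1 |: [set (sqrt_pow r k i) ^+ (2 ^ j.+1 - 1) | j : 'I_6]).
  move=> h1 h2; congr (_ |: (_ |: _)).
  apply: (@key _ (fun n => b ^+ n) _ _ (fun j => rs k j.+1)
           (fun j => (rs k i * (2 ^ j.+1 - 1))%N)) => //.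
clear E1 E2; move: hk K; case: k => [|[|[|[|[|[|[|k]]]]]]] // _ K.
- by exists 1%N => //; apply: K; vm_compute.
- by exists 4%N => //; apply: K; vm_compute.
- by exists 5%N => //; apply: K; vm_compute.
- by exists 2%N => //; apply: K; vm_compute.
- by exists 3%N => //; apply: K; vm_compute.
- by exists 6%N => //; apply: K; vm_compute.
Qed.
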